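(* Let $\ell\ge1$ and $d\ge 2$ be integers. Then $\omega(\mathcal{B}(1,d))=d-1$ and $\omega(\mathcal{B}(2,d))=d^2-d$, and for $\ell\ge 3$, $$d^{\ell}-d^{\ell-1}\le \omega(\mathcal{B}(\ell,d))\le d^{\ell}-d^{\lfloor \ell/2\rfloor}-\left(\lfloor \ell/2\rfloor-1\right).$$
   Context: The BCube $\mathcal{B}(\ell,d)$ ($\ell,d$ positive integers) is the symmetric digraph defined as follows, with $\mathbb{Z}_d=\{0,1,\dots,d-1\}$. - Hosts: all vectors $\mathbf{h}=h_1\cdots h_\ell\in\mathbb{Z}_d^{\ell}$. - Switches: for each layer $k\in\{1,\dots,\ell\}$, one switch $\mathbf{s}^k$ for each vector $s^k_1\cdots s^k_{\ell-1}\in\mathbb{Z}_d^{\ell-1}$. Switches of different layers are distinct vertices. - Links: host $\mathbf{h}$ and layer-$k$ switch $\mathbf{s}^k$ are joined if and only if $s^k_1\cdots s^k_{\ell-1}=h_1\cdots h_{k-1}h_{k+1}\cdots h_\ell$. Each such link gives two arcs, an uplink (host $\to$ switch) and a downlink (switch $\to$ host). There are no other arcs. A host-to-host routing $R$ assigns to every ordered pair of distinct hosts a directed path from the first to the second in $\mathcal{B}(\ell,d)$. $\omega(\mathcal{B}(\ell,d),R)$ is the minimum number of colors (wavelengths) needed to color the paths of $R$ so that any two paths sharing an arc get different colors. The optical index is $\omega(\mathcal{B}(\ell,d))=\min_R\omega(\mathcal{B}(\ell,d),R)$, the minimum taken over all host-to-host routings $R$. *)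

(* Defs.v *)
From Stdlib Require Import ClassicalEpsilon.
From mathcomp Require Import all_boot.
Set Implicit Arguments. Unset Strict Implicit. Unset Printing Implicit Defensive.

Definition host (l d : nat) := {ffun 'I_l -> 'I_d}.
(* Switches: a layer k (in 'I_l) together with a vector in Z_d^(l-1). *)
Definition switch (l d : nat) := ('I_l * {ffun 'I_l.-1 -> 'I_d})%type.
Definition vertex (l d : nat) := (host l d + switch l d)%type.

(* Index in 'I_l of the i-th coordinate that remains after deleting coordinate k
   (i.e. i if i < k, i+1 otherwise).  The default k is never used. *)
Definition delidx (l : nat) (k : 'I_l) (i : 'I_l.-1) : 'I_l := insubd k (bump k i).

Definition linked (l d : nat) (h : host l d) (s : switch l d) : bool :=
  [forall i : 'I_l.-1, s.2 i == h (delidx s.1 i)].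

Definition arc (l d : nat) : rel (vertex l d) :=
  fun u v => match u, v with
             | inl h, inr s => linked h s
             | inr s, inl h => linked h s
             | _, _ => false
             end.

(* A directed path from x to y, given as the list p of vertices after x:
   vertices x :: p, consecutive vertices joined by arcs, no repeated vertex. *)
Definition dipath (l d : nat) (x y : vertex l d) (p : seq (vertex l d)) : bool :=
  [&& path (@arc l d) x p, last x p == y & uniq (x :: p)].

Definition routing (l d : nat) := host l d -> host l d -> seq (vertex l d).

Definition is_routing (l d : nat) (R : routing l d) : Prop :=
  forall a b : host l d, a != b -> dipath (inl a) (inl b) (R a b).

Definition path_arcs (l d : nat) (R : routing l d) (a b : host l d) :
  seq (vertex l d * vertex l d) := zip (inl a :: R a b) (R a b).

Definition proper_coloring (l d : nat) (R : routing l d) {k : nat}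
  (c : host l d -> host l d -> 'I_k) : Prop :=
  forall a b a' b' : host l d, a != b -> a' != b' -> (a, b) != (a', b') ->
    has (fun e => e \in path_arcs R a' b') (path_arcs R a b) ->
    c a b != c a' b'.

Definition colorable_with (l d : nat) (R : routing l d) (k : nat) : Prop :=
  exists c : host l d -> host l d -> 'I_k, proper_coloring R c.

Definition optical_ok (l d k : nat) : Prop :=
  exists R : routing l d, is_routing R /\ colorable_with R k.

(* The optical index omega(B(l,d)): the least k such that optical_ok l d k
   (chosen by classical description; such a least k exists). *)
Definition optical_index (l d : nat) : nat :=
  epsilon (inhabits 0%N)
    (fun w => optical_ok l d w /\ forall k, optical_ok l d k -> (w <= k)%N).

(* Main.v *)
Require Import Defs.
From mathcomp Require Import all_boot zify.
From Stdlib Require Import ClassicalEpsilon Classical.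
Set Implicit Arguments. Unset Strict Implicit. Unset Printing Implicit Defensive.

Lemma card_fix (l d : nat) (j : 'I_l) (v : 'I_d) : #|[set b : {ffun 'I_l -> 'I_d} | b j == v]| = d ^ l.-1.
Proof.
have -> : #|[set b : {ffun 'I_l -> 'I_d} | b j == v]| = #|family (fun i : 'I_l => if i == j then pred1 v else predT)|.
  apply: eq_card => b; rewrite inE; apply/idP/familyP => [/eqP bv i|H].
    by case: eqP => [->|]; rewrite ?bv //= inE.
  by have := H j; rewrite eqxx.
rewrite card_family foldrE big_map big_enum /=.
rewrite (bigD1 j) //= eqxx card1 mul1n.
rewrite (eq_bigr (fun _ => d)); last by move=> i /negbTE ->; rewrite card_ord.
by rewrite prod_nat_const cardC1 card_ord.
Qed.

Lemma val_delidx l (k : 'I_l) (i : 'I_l.-1) : val (delidx k i) = bump k i.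
Proof.
rewrite /delidx val_insubd; case: ifP => // /negP []. 
have := ltn_ord i; have := ltn_ord k; rewrite /bump; case: (k <= i) => /=; lia.
Qed.

Lemma linked_same l d (h h' : host l d) (s : switch l d) (k : 'I_l) :
  linked h s -> linked h' s -> k != s.1 -> h k = h' k.
Proof.
move=> /forallP H /forallP H' nk.
have lt : unbump s.1 k < l.-1.
  have nk' : (val k != val s.1) := nk.
  have := ltn_ord k; have := ltn_ord s.1; move: nk'; rewrite /unbump.
  case: ltnP => /=; lia.
set i := Ordinal lt.
have ei : delidx s.1 i = k.
  apply: val_inj; rewrite val_delidx /= unbumpKcond.
  have nk' : (val k != val s.1) := nk.
  by move: nk'; rewrite eq_sym => /negbTE ->.
by move: (H i) (H' i); rewrite ei => /eqP <- /eqP.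
Qed.

Lemma linked_uniq l d (x : host l d) (s s' : switch l d) :
  linked x s -> linked x s' -> s.1 = s'.1 -> s = s'.
Proof.
case: s => k f; case: s' => k' f' /forallP H /forallP H' /= ek; subst k'.
congr pair; apply/ffunP => i; by move: (H i) (H' i) => /= /eqP -> /eqP ->.
Qed.

Lemma path_layer l d (k : 'I_l) n : forall (p : seq (vertex l d)) (a b : host l d),
  size p <= n -> path (@Defs.arc l d) (inl a) p -> last (inl a) p = inl b -> a k != b k ->
  exists x s, [/\ s.1 = k, linked x s & (inl x, inr s) \in zip (inl a :: p) p].
Proof.
elim: n => [|n IH] [|v p] a b //=.
- by move=> _ _ [->]; rewrite eqxx.
- by move=> _ _ [->]; rewrite eqxx.
case: v => [h|s] /=; first by [].
move=> sz /andP [las pa] lb ab.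
case: (eqVneq s.1 k) => [sk|sk].
  by exists a, s; split => //; rewrite inE eqxx.
case: p sz pa lb => [|w p] //= sz /andP [aw pa] lb.
case: w aw pa lb => [a'|s'] //= la' pa lb.
have eak : a k = a' k by apply: (linked_same las la'); rewrite eq_sym.
have sz' : size p <= n by lia.
have ab' : a' k != b k by rewrite -eak.
have [x [s0 [H1 H2 H3]]] := IH p a' b sz' pa lb ab'.
by exists x, s0; split => //; rewrite !inE H3 !orbT.
Qed.

Lemma lower l d (R : routing l d) K : 0 < l -> 0 < d -> is_routing R -> colorable_with R K ->
  d ^ l - d ^ l.-1 <= K.
Proof.
move=> l0 d0 HR [c Hc].
pose U := fun (ab : host l d * host l d) (x : host l d) (j : 'I_l) =>
  [exists s : switch l d, [&& s.1 == j, linked x s & ((inl x, inr s) \in path_arcs R ab.1 ab.2)]].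
pose P := fun x j => [set ab : host l d * host l d | (ab.1 != ab.2) && U ab x j].
have HP : forall x j, #|P x j| <= K.
  move=> x j.
  rewrite -(@card_in_imset _ _ (fun ab => c ab.1 ab.2)).
    by rewrite (leq_trans (max_card _)) // card_ord.
  move=> [a b] [a' b']; rewrite !inE /= => /andP [ab /existsP [s /and3P [sj ls ins]]].
  move=> /andP [ab' /existsP [s' /and3P [sj' ls' ins']]] ec.
  apply/eqP; apply/negPn/negP => ne.
  suff: has (fun e => e \in path_arcs R a' b') (path_arcs R a b).
    by move/(Hc _ _ _ _ ab ab' ne); rewrite ec eqxx.
  apply/hasP; exists (inl x, inr s) => //.
  by rewrite (linked_uniq ls ls') // (eqP sj) (eqP sj').
have up : \sum_(x : host l d) \sum_(j : 'I_l) #|P x j| <= d ^ l * (l * K).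
  apply: (@leq_trans (\sum_(x : host l d) \sum_(j < l) K)).
    by apply: leq_sum => x _; apply: leq_sum => j _; exact: HP.
  by rewrite !sum_nat_const !card_ord card_ffun !card_ord.
have e : forall x j, #|P x j| = \sum_(ab : host l d * host l d) ((ab.1 != ab.2) && U ab x j).
  move=> x j; rewrite -sum1_card big_mkcond; apply: eq_bigr => ab _; rewrite inE.
  by case: (_ && _).
have lo : \sum_(ab : host l d * host l d) \sum_(j : 'I_l) (ab.1 j != ab.2 j)
    <= \sum_(x : host l d) \sum_(j : 'I_l) #|P x j|.
  have -> : \sum_(x : host l d) \sum_(j : 'I_l) #|P x j| =
     \sum_(x : host l d) \sum_(j : 'I_l) \sum_(ab : host l d * host l d) ((ab.1 != ab.2) && U ab x j).
    by apply: eq_bigr => x _; apply: eq_bigr => j _; exact: e.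
  rewrite (eq_bigr (fun x => \sum_(ab : host l d * host l d) \sum_(j : 'I_l) ((ab.1 != ab.2) && U ab x j)));
    last by move=> x _; rewrite exchange_big.
  rewrite [X in _ <= X]exchange_big /=.
  apply: leq_sum => -[a b] _; rewrite exchange_big /=; apply: leq_sum => j _ /=.
  case: (eqVneq (a j) (b j)) => //= abj.
  have ab : a != b by apply: contraNneq abj => ->.
  have /and3P [pa /eqP la _] := HR a b ab.
  have [x [s [s1 ls ins]]] := @path_layer l d j (size (R a b)) (R a b) a b (leqnn _) pa la abj.
  rewrite (bigD1 x) //= ab /=.
  suff -> : U (a, b) x j by [].
  by apply/existsP; exists s; rewrite s1 eqxx ls.
have cnt : \sum_(ab : host l d * host l d) \sum_(j : 'I_l) (ab.1 j != ab.2 j)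
    = l * (d ^ l * (d ^ l - d ^ l.-1)).
  rewrite exchange_big /=.
  have -> : l * (d ^ l * (d ^ l - d ^ l.-1)) = \sum_(j < l) (d ^ l * (d ^ l - d ^ l.-1))
    by rewrite sum_nat_const card_ord.
  apply: eq_bigr => j _.
  have -> : \sum_(ab : host l d * host l d) (ab.1 j != ab.2 j) =
     \sum_(a : host l d) \sum_(b : host l d) (a j != b j) by rewrite pair_big.
  have hc : d ^ l = #|host l d| by rewrite card_ffun !card_ord.
  rewrite {1}hc -sum_nat_const.
  apply: eq_bigr => a _.
  have := cardsC [set b : host l d | b j == a j].
  rewrite card_fix card_ffun !card_ord => <-; rewrite addKn.
  rewrite -sum1_card [RHS]big_mkcond /=; apply: eq_bigr => b _; rewrite !inE eq_sym.
  by case: (b j == a j).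
have := leq_trans lo up; rewrite cnt mulnCA mulnA [K in _ <= K]mulnA.
by rewrite leq_pmul2l // muln_gt0 l0 expn_gt0 d0.
Qed.




Lemma zip_cat_last T (x : T) (s t : seq T) :
  zip (x :: s ++ t) (s ++ t) = zip (x :: s) s ++ zip (last x s :: t) t.
Proof. by elim: s x => [|y s IH] x //=; rewrite IH. Qed.

Section Route.
Variables l d : nat.
Implicit Types a b : host l d.

Definition X a b (k : nat) : host l d := [ffun i : 'I_l => if i < k then b i else a i].
Definition sw (k : 'I_l) (x : host l d) : switch l d := (k, [ffun j => x (delidx k j)]).
Definition step a b (k : nat) : seq (vertex l d) :=
  if insub k is Some kk then
    (if a kk != b kk then [:: inr (sw kk (X a b k)); inl (X a b k.+1)] else [::])
  else [::].
Fixpoint rt a b n : seq (vertex l d) :=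
  if n is n'.+1 then rt a b n' ++ step a b n' else [::].

Lemma linked_sw x k : linked x (sw k x).
Proof. by apply/forallP => i; rewrite /= ffunE. Qed.

Lemma linked_sw' a b (kk : 'I_l) : linked (X a b kk.+1) (sw kk (X a b kk)).
Proof.
apply/forallP => i; rewrite /= !ffunE.
have ne : (delidx kk i : nat) != (kk : nat) by have := neq_bump kk i; rewrite -val_delidx eq_sym.
have -> : (delidx kk i < kk.+1) = (delidx kk i < kk).
  by apply/idP/idP; move: ne; lia.
by [].
Qed.

Lemma X0 a b : X a b 0 = a. Proof. by apply/ffunP => i; rewrite ffunE. Qed.
Lemma Xl a b : X a b l = b. Proof. by apply/ffunP => i; rewrite ffunE ltn_ord. Qed.

Lemma Xstep a b n : (forall kk : 'I_l, val kk = n -> a kk = b kk) -> X a b n.+1 = X a b n.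
Proof.
move=> H; apply/ffunP => i; rewrite !ffunE ltnS leq_eqVlt.
case: (eqVneq (i : nat) n) => [ein|nein] /=.
  by rewrite ein ltnn H.
by [].
Qed.

Lemma rt_path a b n : path (@Defs.arc l d) (inl a) (rt a b n) && (last (inl a) (rt a b n) == inl (X a b n)).
Proof.
elim: n => [|n IH] /=; first by rewrite X0.
move/andP: IH => [pa /eqP la].
rewrite cat_path last_cat pa la /= /step.
case: insubP => [kk _ ekk|nl].
  case: eqP => [eab|/eqP nab] /=.
    by rewrite Xstep // => kk' ek; have -> : kk' = kk by apply: val_inj; rewrite ek ekk.
  by rewrite -ekk linked_sw linked_sw' eqxx.
rewrite Xstep //= => kk ek; move: nl; rewrite -ek ltn_ord //.
Qed.

Lemma rt_uniq a b n : uniq (inl a :: rt a b n) /\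
  forall v, v \in inl a :: rt a b n ->
    match v with inl h => forall i : 'I_l, n <= i -> h i = a i | inr s => s.1 < n end.
Proof.
elim: n => [|n [IHu IHv]].
  by split => // v; rewrite inE => /eqP ->.
rewrite /= -cat_cons /step.
case: insubP => [kk _ ekk|nl]; last first.
  rewrite !cats0; split => // v Hv; move: (IHv v Hv); case: v {Hv} => [h|s] /= H.
    by move=> i ni; apply: H; lia.
  by lia.
case: eqP => [eab|/eqP nab] /=.
  rewrite !cats0; split => // v Hv; move: (IHv v Hv); case: v {Hv} => [h|s] /= H.
    by move=> i ni; apply: H; lia.
  by lia.
have nsw : inr (sw kk (X a b n)) \notin inl a :: rt a b n.
  by apply/negP => /IHv /=; rewrite ekk ltnn.
have nh : inl (X a b n.+1) \notin inl a :: rt a b n.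
  apply/negP => /IHv /(_ kk); rewrite ekk leqnn ffunE -ekk ltnSn => /(_ isT) /eqP.
  by rewrite eq_sym (negbTE nab).
have U : uniq ((inl a :: rt a b n) ++ [:: inr (sw kk (X a b n)); inl (X a b n.+1)]).
  by rewrite cat_uniq IHu /= (negbTE nsw) (negbTE nh).
split; first exact: U.
move=> v; rewrite -cat_cons mem_cat !inE => /orP [Hv|/orP [/eqP ->|/eqP ->]] /=.
- move: (IHv v Hv); case: v {Hv} => [h|s] /= H; last by lia.
  by move=> i ni; apply: H; lia.
- by rewrite ekk.
- by move=> i ni; rewrite ffunE; case: ltnP => //; lia.
Qed.

Lemma rt_arcs a b n e : e \in zip (inl a :: rt a b n) (rt a b n) ->
  exists kk : 'I_l, [/\ kk < n, a kk != b kk &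
    (e = (inl (X a b kk), inr (sw kk (X a b kk))) \/
     e = (inr (sw kk (X a b kk)), inl (X a b kk.+1)))].
Proof.
elim: n => [|n IH] //=.
move: (rt_path a b n) => /andP [_ /eqP la].
rewrite zip_cat_last la mem_cat => /orP [/IH [kk [k1 k2 k3]]|].
  by exists kk; split => //; lia.
rewrite /step; case: insubP => [kk _ ekk|nl] //.
case: eqP => [eab|/eqP nab] //=.
rewrite !inE => /orP [/eqP ->|/eqP ->]; exists kk; rewrite ekk; split => //; by [left|right].
Qed.

Lemma conflict a b a' b' e : e \in zip (inl a :: rt a b l) (rt a b l) ->
  e \in zip (inl a' :: rt a' b' l) (rt a' b' l) ->
  exists kk : 'I_l, [/\ a kk != b kk, a' kk != b' kk &
    (X a b kk = X a' b' kk \/ X a b kk.+1 = X a' b' kk.+1)].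
Proof.
move=> /rt_arcs [k [_ ab H]] /rt_arcs [k' [_ ab' H']].
case: H H' => -> [] // [] ex es.
- have ek : k = k' by move: es => [].
  subst k'; exists k; split => //; left; by case: ex.
- case: ex => ex; have ek : k = k' by move: ex => [].
  subst k'; exists k; split => //; right; by case: es.
Qed.

End Route.


Section Color.
Variables l d m : nat.
Hypothesis hd : 1 < d.
Hypothesis hl : 0 < l.
Hypothesis hm : m + m <= l.

Definition z : 'I_d := Ordinal (ltnW hd).
Definition gv (x : host l d) (n : nat) : nat :=
  match (insub n : option 'I_l) with Some i => val (x i) | None => 0 end.
Definition mk (f : nat -> nat) : host l d := [ffun i : 'I_l => insubd z (f i)].

Lemma gvE x (i : 'I_l) : gv x i = val (x i).
Proof. by rewrite /gv valK. Qed.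

Lemma gv_out x n : l <= n -> gv x n = 0.
Proof. by rewrite /gv; case: insubP => // i; lia. Qed.

Lemma gv_lt x n : gv x n < d.
Proof. rewrite /gv; case: insubP => // *; [exact: ltn_ord | lia]. Qed.

Lemma gv_mk f n : (forall k, f k < d) -> gv (mk f) n = if n < l then f n else 0.
Proof.
move=> fd; rewrite /gv; case: insubP => [i il <-|nl]; last by rewrite (negbTE nl).
by rewrite ltn_ord ffunE val_insubd fd.
Qed.

Lemma gv_inj x y : (forall n, gv x n = gv y n) -> x = y.
Proof. by move=> H; apply/ffunP => i; apply: val_inj; rewrite -!gvE H. Qed.

Definition diffc (x y : nat) := if x <= y then y - x else y + d - x.
Lemma diffc_lt x y : x < d -> y < d -> diffc x y < d.
Proof. rewrite /diffc; case: (leqP x y); lia. Qed.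
Lemma diffc0 x y : x < d -> y < d -> (diffc x y == 0) = (x == y).
Proof. rewrite /diffc => ? ?; apply/eqP/eqP; case: (leqP x y); lia. Qed.
Lemma diffc_l x x' y : x < d -> x' < d -> y < d -> diffc x y = diffc x' y -> x = x'.
Proof. rewrite /diffc; case: (leqP x y); case: (leqP x' y); lia. Qed.
Lemma diffc_r x y y' : x < d -> y < d -> y' < d -> diffc x y = diffc x y' -> y = y'.
Proof. rewrite /diffc; case: (leqP x y); case: (leqP x y'); lia. Qed.

Definition dif (a b : host l d) : host l d := mk (fun n => diffc (gv a n) (gv b n)).

Lemma gv_dif a b n : gv (dif a b) n = diffc (gv a n) (gv b n).
Proof.
rewrite gv_mk; last by move=> k; apply: diffc_lt; apply: gv_lt.
by case: ltnP => // ln; rewrite !gv_out.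
Qed.

Lemma dif_nz (a b : host l d) (i : 'I_l) : a i != b i -> gv (dif a b) i != 0.
Proof. by rewrite gv_dif diffc0 ?gv_lt // !gvE. Qed.

Definition Aonly (x : host l d) := [forall i : 'I_l, (m <= i) ==> (val (x i) == 0)].

Lemma AonlyP x : reflect (forall n, m <= n -> gv x n = 0) (Aonly x).
Proof.
apply: (iffP forallP) => H.
  move=> n mn; case: (ltnP n l) => nl; last by rewrite gv_out.
  by have := H (Ordinal nl); rewrite mn /= => /eqP <-; rewrite -gvE.
by move=> i; apply/implyP => mi; rewrite -gvE H.
Qed.

Definition swap (x : host l d) : host l d :=
  mk (fun n => if (m <= n) && (n < m + m) then gv x (n - m) else 0).

Lemma gv_swap x n : gv (swap x) n = if (m <= n) && (n < m + m) then gv x (n - m) else 0.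
Proof.
rewrite gv_mk; last by move=> k; case: ifP => _; rewrite ?gv_lt //; lia.
case: ltnP => // ln; case: ifP => //; lia.
Qed.

Definition ev (j : nat) : host l d := mk (fun n => (n == j) : nat).

Lemma gv_ev j n : j < l -> gv (ev j) n = (n == j).
Proof.
move=> jl; rewrite gv_mk; last by move=> k; case: eqP => _; lia.
by case: ltnP => // ln; case: eqP => //; lia.
Qed.

Lemma ev_inj j j' : j < l -> j' < l -> ev j = ev j' -> j = j'.
Proof.
move=> jl jl' e; have h := gv_ev j jl'; rewrite -e gv_ev // eqxx in h.
by move: h; case: eqP.
Qed.

Definition Eset := [set ev (m.+1 + val j) | j : 'I_m.-1].

Lemma EsetP x : x \in Eset -> exists2 j, m < j < m + m & x = ev j.
Proof. by move=> /imsetP [j _ ->]; exists (m.+1 + j) => //; have := ltn_ord j; lia. Qed.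

Definition r0 x := if Aonly x then swap x else x.
Definition rep x := if r0 x \in Eset then ev m else r0 x.

Definition disj (x y : host l d) := forall n, gv x n = 0 \/ gv y n = 0.

Lemma swap_inj x y : Aonly x -> Aonly y -> swap x = swap y -> x = y.
Proof.
move=> /AonlyP ax /AonlyP ay e; apply: gv_inj => n.
case: (ltnP n m) => nm; last by rewrite (ax n nm) (ay n nm).
have := gv_swap x (n + m); rewrite e gv_swap.
have -> : (m <= n + m) && (n + m < m + m) by apply/andP; split; lia.
by rewrite addnK.
Qed.

Lemma swap_disj x : Aonly x -> disj x (swap x).
Proof.
move=> /AonlyP ax n; rewrite gv_swap.
case: (ltnP n m) => nm; last by left; apply: ax.
by right.
Qed.

Lemma disjC x y : disj x y -> disj y x.
Proof. by move=> H n; case: (H n); [right|left]. Qed.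

Lemma r0_inj x y : r0 x = r0 y -> x = y \/ disj x y.
Proof.
rewrite /r0; case: ifP => ax; case: ifP => ay e.
- by left; apply: swap_inj.
- by right; rewrite -e; apply: swap_disj.
- by right; rewrite e; apply: disjC; apply: swap_disj.
- by left.
Qed.

Lemma r0_sing x j : m <= j < m + m -> r0 x = ev j ->
  forall n, gv x n != 0 -> n = j \/ n + m = j.
Proof.
move=> jm; have jl : j < l by lia.
rewrite /r0; case: ifP => ax e n nz.
  move/AonlyP: ax => ax.
  have nm : n < m by case: (ltnP n m) => // mn; rewrite ax in nz.
  have := gv_swap x (n + m); rewrite e gv_ev //.
  have -> : (m <= n + m) && (n + m < m + m) by apply/andP; split; lia.
  rewrite addnK; case: eqP => [->|_]; first by right.
  by move=> h; rewrite -h in nz.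
by left; move: nz; rewrite e gv_ev //; case: (n =P j).
Qed.

Lemma rep_prop x y : rep x = rep y -> x = y \/ disj x y.
Proof.
rewrite /rep; case: ifP => ex; case: ifP => ey e.
- have [j jm ej] := EsetP ex; have [j' jm' ej'] := EsetP ey.
  case: (eqVneq j j') => [jj|jj].
    by apply: r0_inj; rewrite ej ej' jj.
  right => n; case: (eqVneq (gv x n) 0) => [|nx]; first by left.
  case: (eqVneq (gv y n) 0) => [|ny]; first by right.
  have jm1 : m <= j < m + m by lia.
  have jm1' : m <= j' < m + m by lia.
  have := r0_sing jm1 ej nx; have := r0_sing jm1' ej' ny; lia.
- have [j jm ej] := EsetP ex.
  right => n; case: (eqVneq (gv x n) 0) => [|nx]; first by left.
  case: (eqVneq (gv y n) 0) => [|ny]; first by right.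
  have jm1 : m <= j < m + m by lia.
  have jm2 : m <= m < m + m by lia.
  have := r0_sing jm1 ej nx; have := r0_sing jm2 (esym e) ny; lia.
- have [j jm ej] := EsetP ey.
  right => n; case: (eqVneq (gv x n) 0) => [|nx]; first by left.
  case: (eqVneq (gv y n) 0) => [|ny]; first by right.
  have jm1 : m <= j < m + m by lia.
  have jm2 : m <= m < m + m by lia.
  have := r0_sing jm1 ej ny; have := r0_sing jm2 e nx; lia.
- by apply: r0_inj.
Qed.

Definition Aset := [set x | Aonly x].
Definition C := ~: (Aset :|: Eset).

Lemma ev_notA j : m <= j < l -> ~~ Aonly (ev j).
Proof.
move=> jm; apply/negP => /AonlyP /(_ j) H.
by have := H (ltac:(lia)); rewrite gv_ev ?eqxx //; lia.
Qed.

Lemma evmC : ev m \in C.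
Proof.
rewrite !inE negb_or ev_notA ?andTb; last by lia.
apply/negP => /EsetP [j jm /ev_inj] h.
have : m = j by apply: h; lia.
lia.
Qed.

Lemma rep_C x : (exists n, gv x n != 0) -> rep x \in C.
Proof.
move=> [n nz]; rewrite /rep; case: ifP => e; first exact: evmC.
rewrite !inE negb_or e andbT /r0.
case: ifP => ax; last by rewrite ax.
move/AonlyP: (ax) => ax'.
have nm : n < m by case: (ltnP n m) => // mn; rewrite ax' in nz.
apply/AonlyP => /(_ (n + m) (ltac:(lia))).
rewrite gv_swap.
have -> : (m <= n + m) && (n + m < m + m) by apply/andP; split; lia.
by rewrite addnK => h; rewrite h in nz.
Qed.

Lemma card_C : #|C| <= d ^ l - d ^ m - (m - 1).
Proof.
have hA : d ^ m <= #|Aset|.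
  pose D := [pred i : 'I_l | i < m].
  have cD : #|D| = m.
    have ml : m <= l by lia.
    have wi : injective (widen_ord ml) by move=> i j /(congr1 val) /= /val_inj.
    rewrite -[RHS](card_ord m) -(card_imset _ wi).
    apply: eq_card => i; rewrite inE /=; apply/idP/imsetP.
      by move=> im; exists (Ordinal im) => //; apply: val_inj.
    by move=> [j _ ->] /=.
  have := card_pffun_on z D predT; rewrite cD card_ord => <-.
  apply: subset_leq_card; apply/subsetP => f /pffun_onP [sub _].
  rewrite inE; apply/forallP => i; apply/implyP => mi.
  apply/negPn/negP => nz.
  have : i \in D by apply: (subsetP sub); rewrite inE /=; apply: contra nz => /eqP ->.
  rewrite inE /=; lia.
have hE : m - 1 <= #|Eset|.
  rewrite card_in_imset ?card_ord; first by lia.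
  move=> j j' _ _ e; apply: ord_inj.
  have h1 : m.+1 + j < l by have := ltn_ord j; lia.
  have h2 : m.+1 + j' < l by have := ltn_ord j'; lia.
  have := ev_inj h1 h2 e; lia.
have hAE : Aset :&: Eset = set0.
  apply/setP => x; rewrite !inE; apply/negP => /andP [ax /EsetP [j jm ej]].
  by move: ax; rewrite ej; apply/negP; apply: ev_notA; lia.
have := cardsC (Aset :|: Eset); rewrite cardsU hAE cards0 subn0 card_ffun !card_ord.
rewrite /C; lia.
Qed.

End Color.


Lemma dif_cancel l d m (hd : 1 < d) (hl : 0 < l) (hm : m + m <= l) (a b a' b' : host l d) k :
  dif hd a b = dif hd a' b' -> X a b k = X a' b' k -> a = a' /\ b = b'.
Proof.
move=> ed ex.
have H : forall i : 'I_l, a i = a' i /\ b i = b' i.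
  move=> i.
  have e1 := congr1 (fun x => gv x i) ed; rewrite /= !(gv_dif hd hl hm) !gvE in e1.
  have e2 : X a b k i = X a' b' k i by rewrite ex.
  rewrite !ffunE in e2.
  have la := ltn_ord (a i); have lb := ltn_ord (b i).
  have la' := ltn_ord (a' i); have lb' := ltn_ord (b' i).
  case: ifP e2 => _ e2.
    rewrite e2 in e1; split => //; apply: val_inj.
    exact: (diffc_l hd hl hm la la' lb' e1).
  rewrite e2 in e1; split => //; apply: val_inj.
  exact: (diffc_r hd hl hm la' lb lb' e1).
by split; apply/ffunP => i; case: (H i).
Qed.

Lemma upper_ok l d m : 1 < d -> 0 < l -> m + m <= l -> optical_ok l d (d ^ l - d ^ m - (m - 1)).
Proof.
move=> hd hl hm.
exists (fun a b => rt a b l); split.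
  move=> a b _; rewrite /dipath; have /andP [pa /eqP la] := rt_path a b l; rewrite Xl in la.
  by rewrite pa la eqxx; case: (rt_uniq a b l) => ->.
pose g := fun (ab : host l d * host l d) =>
  if ab.1 == ab.2 then ev l hd m else rep m hd (dif hd ab.1 ab.2).
have gC : forall ab, g ab \in C l m hd.
  move=> [a b]; rewrite /g /=; case: eqP => [_|/eqP ab]; first exact: evmC.
  apply: (rep_C hd hl hm).
  have [i ni] : exists i, a i != b i.
    apply/existsP; apply: contraNT ab => /existsPn H; apply/eqP/ffunP => i.
    by apply/eqP; rewrite -[_ == _]negbK H.
  by exists i; apply: (dif_nz hd hl hm).
have hK := card_C hd hl hm.
exists (fun a b => widen_ord hK (enum_rank_in (evmC hd hl hm) (g (a, b)))).
move=> a b a' b' ab ab' neq /hasP [e e1 e2]; apply/negP => /eqP ec.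
have ec' : g (a, b) = g (a', b').
  apply: (@enum_rank_in_inj _ _ _ _ (evmC hd hl hm) (evmC hd hl hm) _ _ (gC (a, b)) (gC (a', b'))).
  by apply: val_inj; move: (congr1 val ec).
move: ec'; rewrite /g /= (negbTE ab) (negbTE ab') => /(rep_prop hl hm) H.
have [kk [k1 k2 k3]] := conflict e1 e2.
case: H => [ed|dj].
  have [ea eb] : a = a' /\ b = b'.
    by case: k3 => k3; [exact: (dif_cancel hl hm ed k3) | exact: (dif_cancel hl hm ed k3)].
  by move: neq; rewrite ea eb eqxx.
case: (dj kk) => /eqP; apply/negP; exact: (dif_nz hd hl hm).
Qed.

Lemma least_exists (P : nat -> Prop) n : P n -> exists w, P w /\ forall k, P k -> w <= k.
Proof.
elim: n {-2}n (leqnn n) => [|N IH] n nN Pn.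
  exists n; split => // k _; lia.
case: (classic (exists k, k < n /\ P k)) => [[k [kn Pk]]|H].
  by apply: (IH k) => //; lia.
exists n; split => // k Pk; case: (ltnP k n) => // kn; case: H; by exists k.
Qed.

Lemma index_spec l d k : optical_ok l d k ->
  optical_ok l d (optical_index l d) /\ forall k', optical_ok l d k' -> optical_index l d <= k'.
Proof.
move=> ok; rewrite /optical_index.
apply: (@epsilon_spec nat (inhabits 0) (fun w => optical_ok l d w /\ forall k, optical_ok l d k -> (w <= k)%N)).
exact: least_exists ok.
Qed.

Lemma bounds l d : 0 < l -> 1 < d ->
  d ^ l - d ^ l.-1 <= optical_index l d <= d ^ l - d ^ l./2 - (l./2 - 1).
Proof.
move=> hl hd.
have hm : l./2 + l./2 <= l by lia.
have [ok le] := index_spec (upper_ok hd hl hm).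
have [R [HR HC]] := ok.
rewrite (lower hl _ HR HC) ?le //; last by lia.
exact: upper_ok.
Qed.

Theorem theorem2 (d : nat) (hd : (2 <= d)%N) :
  optical_index 1 d = (d - 1)%N /\
  optical_index 2 d = (d ^ 2 - d)%N /\
  (forall l : nat, (3 <= l)%N ->
     (d ^ l - d ^ l.-1 <= optical_index l d)%N /\
     (optical_index l d <= d ^ l - d ^ l./2 - (l./2 - 1))%N).
Proof.
split.
  have /andP [h1 h2] := bounds (isT : 0 < 1) hd.
  apply/eqP; rewrite eqn_leq; apply/andP; split.
    by move: h2; rewrite /= expn1 expn0 subn0.
  by move: h1; rewrite /= expn1 expn0.
split.
  have /andP [h1 h2] := bounds (isT : 0 < 2) hd.
  apply/eqP; rewrite eqn_leq; apply/andP; split.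
    by move: h2; rewrite /= expn1 subn0.
  by move: h1; rewrite /= expn1.
move=> l hl; have /andP [h1 h2] := bounds (ltnW (ltnW hl)) hd.
by split.
Qed.
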